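(* The matrix $A$ normalizes the group $\mathrm{H}$, that is, $A\mathrm{H}A^{-1}=\mathrm{H}$.
   Context: Let $\langle x,y\rangle=x_1y_1+\dots+x_6y_6-x_7y_7$ on $\mathbb{R}^7$, $H^6=\{x:\langle x,x\rangle=-1,x_7>0\}$, and $e_1,\dots,e_7$ the standard basis. $\Gamma^6=PO_{6,1}\mathbb{Z}$ is the group of $7\times7$ integer matrices preserving $\langle\cdot,\cdot\rangle$ and mapping $H^6$ to itself. $\mathrm{K}^6$ is the group of the $64$ matrices $\mathrm{diag}(\varepsilon_1,\dots,\varepsilon_6,1)$, $\varepsilon_i=\pm1$. Define vectors $u_1,\dots,u_{27}$: $u_i=-e_i$ for $1\le i\le 6$; $u_7,\dots,u_{21}$ are $e_a+e_b+e_7$ for the pairs $(a,b)=(1,2),(1,3),(2,3),(1,4),(2,4),(3,4),(1,5),(2,5),(3,5),(4,5),(1,6),(2,6),(3,6),(4,6),(5,6)$ in this order; $u_{22},\dots,u_{27}$ are $\sum_{i=1}^6e_i-e_c+2e_7$ for $c=6,5,4,3,2,1$ in this order. Let $R_j$ be the reflection $x\mapsto x-2\langle x,u_j\rangle u_j$. For $7\le j\le27$ let $k_j\in\mathrm{K}^6$ be the matrix with $\varepsilon_i=-1$ exactly for $i\in N_j$, where $N_7=\{2,3,5\}$, $N_8=\{1,2,3,4,5\}$, $N_9=\{3,4,5\}$, $N_{10}=\{1,2,3,5,6\}$, $N_{11}=\{1,4,6\}$, $N_{12}=\{2,3,5\}$, $N_{13}=\{3,4,5\}$, $N_{14}=\{1,2,5\}$,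 $N_{15}=\{5\}$, $N_{16}=\{2,4,6\}$, $N_{17}=\{1,2,5\}$, $N_{18}=\{2,4,6\}$, $N_{19}=\{6\}$, $N_{20}=\{1,3,4\}$, $N_{21}=\{1,2,3,5,6\}$, $N_{22}=\{1,3,4\}$, $N_{23}=\{2\}$, $N_{24}=\{1,4,6\}$, $N_{25}=\{1,2,3,4,5\}$, $N_{26}=\{4\}$, $N_{27}=\{3\}$. Let $\mathrm{H}$ be the subgroup of $\Gamma^6$ generated by all matrices $\ell R_j\ell k_j$ with $\ell\in\mathrm{K}^6$ and $7\le j\le 27$. Let $A=\begin{pmatrix}1&0&0&0&0&0&0\\0&1&0&0&1&0&-1\\0&0&0&0&0&1&0\\0&-1&0&-1&0&0&1\\0&0&1&0&0&0&0\\0&0&0&-1&-1&0&1\\0&-1&0&-1&-1&0&2\end{pmatrix}\in\Gamma^6.$ *)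

(* Defs.v *)
(* Indices: e_1..e_7 are 0-based positions 0..6 of 'cV[int]_7. *)
From HB Require Import structures.
From mathcomp Require Import all_boot all_order all_algebra.
Set Implicit Arguments. Unset Strict Implicit. Unset Printing Implicit Defensive.
Import Order.TTheory GRing.Theory Num.Theory.
Local Open Scope ring_scope.

Definition Jform : 'M[int]_7 := diag_mx (\row_(k < 7) if (k < 6)%N then 1 else -1).

Definition lform (x y : 'cV[int]_7) : int := (x^T *m Jform *m y) 0 0.

(* standard basis vector e_i, 1 <= i <= 7 (1-based) *)
Definition ev (i : nat) : 'cV[int]_7 := \col_(k < 7) (((k : nat) == i.-1)%N)%:R.

Definition pairs_u : seq (nat * nat) :=
  [:: (1,2); (1,3); (2,3); (1,4); (2,4); (3,4); (1,5); (2,5); (3,5); (4,5);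
      (1,6); (2,6); (3,6); (4,6); (5,6)].

Definition u (j : nat) : 'cV[int]_7 :=
  if (j <= 6)%N then - ev j
  else if (j <= 21)%N then
    let p := nth (0%N, 0%N) pairs_u (j - 7) in ev p.1 + ev p.2 + ev 7
  else (\sum_(1 <= i < 7) ev i) - ev (28 - j) + 2 *: ev 7.

Definition Rref (j : nat) : 'M[int]_7 := 1%:M - 2 *: (u j *m (u j)^T *m Jform).

(* K^6 : diag(eps_1,...,eps_6,1); eps k true means entry -1 at (1-based) k.+1 *)
Definition Kof (eps : nat -> bool) : 'M[int]_7 :=
  diag_mx (\row_(k < 7) if (k < 6)%N && eps k then -1 else 1).

Definition inK (l : 'M[int]_7) : Prop := exists eps : nat -> bool, l = Kof eps.

(* the sets N_7, ..., N_27 (1-based coordinates) *)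
Definition Nlist : seq (seq nat) :=
  [:: [:: 2; 3; 5]; [:: 1; 2; 3; 4; 5]; [:: 3; 4; 5]; [:: 1; 2; 3; 5; 6];
      [:: 1; 4; 6]; [:: 2; 3; 5]; [:: 3; 4; 5]; [:: 1; 2; 5]; [:: 5];
      [:: 2; 4; 6]; [:: 1; 2; 5]; [:: 2; 4; 6]; [:: 6]; [:: 1; 3; 4];
      [:: 1; 2; 3; 5; 6]; [:: 1; 3; 4]; [:: 2]; [:: 1; 4; 6];
      [:: 1; 2; 3; 4; 5]; [:: 4]; [:: 3]]%N.

Definition Nset (j : nat) : seq nat := nth [::] Nlist (j - 7).

Definition kmat (j : nat) : 'M[int]_7 := Kof (fun k => (k.+1 \in Nset j)).

Definition isGen (g : 'M[int]_7) : Prop :=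
  exists l j, inK l /\ (7 <= j <= 27)%N /\ g = l *m Rref j *m l *m kmat j.

(* H = subgroup generated by the generators: all finite products of
   generators and their inverses (these matrices are unimodular integer
   matrices, invmx is the inverse over int). *)
Inductive inH : 'M[int]_7 -> Prop :=
| inH_one : inH 1%:M
| inH_gen : forall g M, isGen g -> inH M -> inH (g *m M)
| inH_geninv : forall g M, isGen g -> inH M -> inH (invmx g *m M).

Definition Arows : seq (seq int) :=
  [:: [:: 1; 0; 0; 0; 0; 0; 0];
      [:: 0; 1; 0; 0; 1; 0; -1];
      [:: 0; 0; 0; 0; 0; 1; 0];
      [:: 0; -1; 0; -1; 0; 0; 1];
      [:: 0; 0; 1; 0; 0; 0; 0];
      [:: 0; 0; 0; -1; -1; 0; 1];
      [:: 0; -1; 0; -1; -1; 0; 2]].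

Definition Amat : 'M[int]_7 := \matrix_(i < 7, j < 7) nth 0 (nth [::] Arows i) j.

(* Main.v *)
Require Import Defs.
From HB Require Import structures.
From mathcomp Require Import all_boot all_order all_algebra.
Import GRing.Theory.
Local Open Scope ring_scope.



Definition nth0 (a : seq (seq int)) (i j : nat) : int := nth 0 (nth [::] a i) j.
Definition toM (a : seq (seq int)) : 'M[int]_7 := \matrix_(i < 7, j < 7) nth0 a i j.
Definition mk (f : nat -> nat -> int) : seq (seq int) :=
  mkseq (fun i => mkseq (fun j => f i j) 7) 7.
Lemma nth0_mk f (i j : 'I_7) : nth0 (mk f) i j = f i j.
Proof. by rewrite /nth0 /mk !nth_mkseq. Qed.
Definition lmul a b := mk (fun i j =>
  foldr (fun k acc => nth0 a i k * nth0 b k j + acc) 0 (iota 0 7)).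
Lemma toM_mul a b : toM a *m toM b = toM (lmul a b).
Proof.
apply/matrixP => i j; rewrite !mxE /lmul nth0_mk.
by rewrite !big_ord_recr big_ord0 /= !mxE /= add0r addr0 !addrA.
Qed.
Definition eqM a b := all (fun i => all (fun j => nth0 a i j == nth0 b i j) (iota 0 7)) (iota 0 7).
Lemma eqM_toM a b : eqM a b -> toM a = toM b.
Proof.
move=> H; apply/matrixP => i j; rewrite !mxE.
have Hi : (i : nat) \in iota 0 7 by rewrite mem_iota /=.
have Hj : (j : nat) \in iota 0 7 by rewrite mem_iota /=.
by have /allP/(_ j Hj)/eqP := allP H i Hi.
Qed.

Definition idl := mk (fun i j => ((i == j)%N)%:R).
Lemma toM_id : toM idl = 1%:M.
Proof. by apply/matrixP => i j; rewrite !mxE nth0_mk. Qed.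

Definition evl (i : nat) : seq int := mkseq (fun k => ((k == i.-1)%N)%:R) 7.
Definition ul (j : nat) : seq int :=
  if (j <= 6)%N then mkseq (fun k => - nth 0 (evl j) k) 7
  else if (j <= 21)%N then
    let p := nth (0%N, 0%N) pairs_u (j - 7) in
    mkseq (fun k => nth 0 (evl p.1) k + nth 0 (evl p.2) k + nth 0 (evl 7) k) 7
  else mkseq (fun k => ((k < 6)%N)%:R - nth 0 (evl (28 - j)) k + 2 * nth 0 (evl 7) k) 7.

Lemma ev_entry i (k : 'I_7) : ev i k 0 = nth 0 (evl i) k.
Proof. by rewrite !mxE /evl nth_mkseq. Qed.

Lemma u_entry j (k : 'I_7) : u j k 0 = nth 0 (ul j) k.
Proof.
rewrite /u /ul. case: ifP => _.
  by rewrite !mxE nth_mkseq // /evl nth_mkseq.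
case: ifP => _.
  by rewrite !mxE nth_mkseq // /evl !nth_mkseq.
rewrite mxE mxE summxE /index_iota /= !big_cons big_nil !mxE nth_mkseq // /evl !nth_mkseq //.
by case: k => [[|[|[|[|[|[|[|]]]]]]] Hk] //=; rewrite !add0r ?addr0.
Qed.

Definition Jd (b : nat) : int := if (b < 6)%N then 1 else -1.
Definition Rl (t : nat) := mk (fun a b =>
  ((a == b)%N)%:R - 2 * (nth 0 (ul t) a * nth 0 (ul t) b * Jd b)).
Lemma Rref_toM t : Rref t = toM (Rl t).
Proof.
apply/matrixP => a b.
by rewrite /Rref /Jform mul_mx_diag !mxE nth0_mk big_ord1 !mxE !u_entry /Jd.
Qed.

Definition Kl (e : nat -> bool) := mk (fun a b =>
  if (a == b)%N then (if (a < 6)%N && e a then -1 else 1) else 0).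
Lemma Kof_toM e : Kof e = toM (Kl e).
Proof.
apply/matrixP => a b; rewrite /Kof !mxE nth0_mk.
have -> : ((a:nat) == b) = (a == b) by []. by case: (a == b).
Qed.

Definition prodR (s : seq nat) : 'M[int]_7 := foldr (fun t M => Rref t *m M) 1%:M s.
Definition lprod (s : seq nat) := foldr (fun t acc => lmul (Rl t) acc) idl s.
Lemma prodR_toM s : prodR s = toM (lprod s).
Proof.
elim: s => [|t s IH] /=; first by rewrite toM_id.
by rewrite IH Rref_toM toM_mul.
Qed.

Definition WA (t:nat) : seq nat := nth [::] [:: [::]; [:: 1]; [:: 2; 11; 2]; [:: 5]; [:: 20]; [:: 2; 18; 2]; [:: 3]; [:: 17]; [:: 2; 25; 2]; [:: 21]; [:: 2; 7; 2]; [:: 4]; [:: 2; 14; 2]; [:: 10]; [:: 2]; [:: 16]; [:: 6]; [:: 2; 23; 2]; [:: 19]; [:: 2; 27; 2]; [:: 2; 9; 2]; [:: 12]; [:: 13]; [:: 2; 24; 2]; [:: 26]; [:: 8]; [:: 2; 22; 2]; [:: 15]]%N t.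
Definition WAi (t:nat) : seq nat := nth [::] [:: [::]; [:: 1]; [:: 14]; [:: 6]; [:: 11]; [:: 3]; [:: 16]; [:: 14; 10; 14]; [:: 25]; [:: 14; 20; 14]; [:: 13]; [:: 14; 2; 14]; [:: 21]; [:: 22]; [:: 14; 12; 14]; [:: 27]; [:: 15]; [:: 7]; [:: 14; 5; 14]; [:: 18]; [:: 4]; [:: 9]; [:: 14; 26; 14]; [:: 14; 17; 14]; [:: 14; 23; 14]; [:: 14; 8; 14]; [:: 24]; [:: 14; 19; 14]]%N t.
Definition Ail : seq (seq int) := [:: [:: 1; 0; 0; 0; 0; 0; 0]; [:: 0; 1; 0; -1; 0; 0; 1]; [:: 0; 0; 0; 0; 1; 0; 0]; [:: 0; 0; 0; -1; 0; -1; 1]; [:: 0; 1; 0; 0; 0; -1; 1]; [:: 0; 0; 1; 0; 0; 0; 0]; [:: 0; 1; 0; -1; 0; -1; 2]].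




Definition lam (t : nat) : nat -> bool :=
  fun k => if (t <= 6)%N then (k.+1 == t)%N else (k.+1 \in Nset t).
Definition lams (s : seq nat) (k : nat) : bool := foldr (fun t b => lam t k (+) b) false s.
Definition rng (t : nat) : bool := (0 < t <= 27)%N.
Definition rng6 (t : nat) : bool := (0 < t <= 6)%N.

Lemma lams_cat a b k : lams (a ++ b) k = lams a k (+) lams b k.
Proof. by elim: a => [|t a IH] //=; rewrite IH addbA. Qed.

Lemma Kof_ext e e' : (forall k, (k < 6)%N -> e k = e' k) -> Kof e = Kof e'.
Proof.
move=> H; rewrite /Kof; congr diag_mx; apply/rowP => k; rewrite !mxE.
by case: ltnP => // hk; rewrite H.
Qed.

Lemma Kof_mul e e' : Kof e *m Kof e' = Kof (fun k => e k (+) e' k).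
Proof.
rewrite /Kof mulmx_diag; congr diag_mx; apply/rowP => k; rewrite !mxE.
by case: (k < 6)%N; case: (e k); case: (e' k) => //=; rewrite ?mulrNN ?mulr1 ?mul1r.
Qed.

Lemma Kof0 : Kof (fun _ => false) = 1%:M.
Proof. by rewrite Kof_toM -toM_id; apply: eqM_toM; vm_compute. Qed.

Lemma Kof_inv e : Kof e *m Kof e = 1%:M.
Proof. by rewrite Kof_mul -Kof0; apply: Kof_ext => k _; rewrite addbb. Qed.

Lemma all_iota {P : pred nat} {m n : nat} (t : nat) : all P (iota m n) -> (m <= t < m + n)%N -> P t.
Proof. by move=> /allP H ht; apply: H; rewrite mem_iota. Qed.

Lemma checkR6 : all (fun t => eqM (Rl t) (Kl (lam t))) (iota 1 6).
Proof. by vm_compute. Qed.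
Lemma R_small t : rng6 t -> Rref t = Kof (lam t).
Proof.
move=> ht; rewrite Rref_toM Kof_toM; apply: eqM_toM.
apply: (all_iota t checkR6); by case/andP: ht => -> h; rewrite /= add1n ltnS.
Qed.

Lemma checkR2 : all (fun t => eqM (lmul (Rl t) (Rl t)) idl) (iota 1 27).
Proof. by vm_compute. Qed.
Lemma R_inv t : rng t -> Rref t *m Rref t = 1%:M.
Proof.
move=> ht; rewrite Rref_toM toM_mul -toM_id; apply: eqM_toM.
apply: (all_iota t checkR2); by case/andP: ht => -> h; rewrite /= add1n ltnS.
Qed.

Lemma Hmul M N : inH M -> inH N -> inH (M *m N).
Proof.
elim=> [|g M' hg _ IH|g M' hg _ IH] HN; first by rewrite mul1mx.
  by rewrite -mulmxA; apply: inH_gen => //; apply: IH.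
by rewrite -mulmxA; apply: inH_geninv => //; apply: IH.
Qed.

Lemma Hlam_aux s : all rng s -> forall e,
  inH (Kof e *m prodR s *m Kof (fun k => e k (+) lams s k)).
Proof.
elim: s => [|t s IH] /=.
  move=> _ e; rewrite mulmx1; rewrite (@Kof_ext _ e) ?Kof_inv; first exact: inH_one.
  by move=> k _; rewrite addbF.
move=> /andP[ht hs] e.
set e1 := fun k => e k (+) lam t k.
have -> : Kof e *m (Rref t *m prodR s) *m Kof (fun k => e k (+) (lam t k (+) lams s k))
  = (Kof e *m Rref t *m Kof e1) *m (Kof e1 *m prodR s *m Kof (fun k => e1 k (+) lams s k)).
  rewrite (@Kof_ext (fun k => e k (+) (lam t k (+) lams s k)) (fun k => e1 k (+) lams s k));
    last by move=> k _; rewrite /e1 addbA.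
  by rewrite !mulmxA -[_ *m Kof e1 *m Kof e1]mulmxA Kof_inv mulmx1.
apply: Hmul; last exact: IH.
case: (leqP t 6) => h6.
  rewrite R_small; last by rewrite /rng6 h6 andbT; case/andP: ht.
  rewrite !Kof_mul (@Kof_ext _ (fun _ => false)) ?Kof0; first exact: inH_one.
  by move=> k _; rewrite /e1; case: (e k); case: (lam t k).
rewrite /e1 -Kof_mul mulmxA -[X in inH X]mulmx1.
apply: inH_gen; last exact: inH_one.
exists (Kof e), t; split; first by exists e.
split; first by case/andP: ht => _ ->; rewrite andbT.
congr (_ *m _); rewrite /kmat; apply: Kof_ext => k _.
by rewrite /lam leqNgt h6.
Qed.

Lemma Hlam s : all rng s -> (forall k, (k < 6)%N -> lams s k = false) -> inH (prodR s).
Proof.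
move=> hs hl; have := @Hlam_aux s hs (fun _ => false).
rewrite Kof0 mul1mx (@Kof_ext _ (fun _ => false)) ?Kof0 ?mulmx1 //.

Qed.



Definition Le (eps : nat -> bool) : seq nat := [seq i.+1 | i <- iota 0 6 & eps i].

Lemma Le_rng6 eps : all rng6 (Le eps).
Proof.
rewrite /Le all_map; apply/allP => i; rewrite mem_filter mem_iota /= /rng6.
by case/andP => _ ->.
Qed.

Lemma rng6_rng s : all rng6 s -> all rng s.
Proof.
move=> /allP H; apply/allP => t /H; rewrite /rng6 /rng => /andP[-> h] /=.
exact: leq_trans h _.
Qed.

Lemma prodR_cat a b : prodR (a ++ b) = prodR a *m prodR b.
Proof. by elim: a => [|t a IH] /=; rewrite ?mul1mx // IH mulmxA. Qed.

Lemma prodR_cons t s : prodR (t :: s) = Rref t *m prodR s.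
Proof. by []. Qed.

Lemma prodR_small s : all rng6 s -> prodR s = Kof (lams s).
Proof.
elim: s => [|t s IH] /=.
  by move=> _; rewrite -Kof0; apply: Kof_ext.
by case/andP=> ht hs; rewrite IH // R_small // Kof_mul.
Qed.

Lemma lams_Le eps k : (k < 6)%N -> lams (Le eps) k = eps k.
Proof.
rewrite /Le.
case E0: (eps 0%N); case E1: (eps 1%N); case E2: (eps 2%N);
case E3: (eps 3%N); case E4: (eps 4%N); case E5: (eps 5%N);
by case: k => [|[|[|[|[|[|]]]]]] //= _; rewrite ?E0 ?E1 ?E2 ?E3 ?E4 ?E5.
Qed.

Lemma Kof_Le eps : Kof eps = prodR (Le eps).
Proof.
rewrite prodR_small ?Le_rng6 //; apply: Kof_ext => k hk; by rewrite lams_Le.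
Qed.

Lemma checkN : all (fun j => all rng6 (Nset j) &&
   all (fun k => lams (Nset j) k == (k.+1 \in Nset j)) (iota 0 6)) (iota 7 21).
Proof. by vm_compute. Qed.

Lemma kmat_prod j : (7 <= j <= 27)%N -> all rng6 (Nset j) /\ kmat j = prodR (Nset j).
Proof.
move=> hj; have /andP[h1 h2] := all_iota j checkN hj.
split => //; rewrite prodR_small // /kmat; apply: Kof_ext => k hk.
by have /eqP -> := all_iota k h2 hk.
Qed.

Lemma inv_of (A B : 'M[int]_7) : A *m B = 1%:M -> invmx A = B.
Proof.
move=> h; have [uA _] := mulmx1_unit h.
by rewrite -[invmx A]mulmx1 -h mulmxA mulVmx // mul1mx.
Qed.

Lemma lamsW_cat (W : nat -> seq nat) a b k :
  lams (flatten (map W (a ++ b))) k =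
  lams (flatten (map W a)) k (+) lams (flatten (map W b)) k.
Proof. by rewrite map_cat flatten_cat lams_cat. Qed.

Section Conj.
Variables (X Y : 'M[int]_7) (W : nat -> seq nat).
Hypothesis hXY : X *m Y = 1%:M.
Hypothesis hYX : Y *m X = 1%:M.
Hypothesis hW : forall t, rng t -> X *m Rref t = prodR (W t) *m X.
Hypothesis hWr : forall t, rng t -> all rng (W t).
Hypothesis hchk : forall j, (7 <= j <= 27)%N -> forall k, (k < 6)%N ->
  lams (W j) k (+) lams (flatten (map W (Nset j))) k = false.

Lemma X_prod s : all rng s -> X *m prodR s = prodR (flatten (map W s)) *m X.
Proof.
elim: s => [|t s IH] /=; first by rewrite mulmx1 mul1mx.
by case/andP=> ht hs; rewrite mulmxA hW // -mulmxA IH // mulmxA prodR_cat.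
Qed.

Lemma flat_rng s : all rng s -> all rng (flatten (map W s)).
Proof.
elim: s => [|t s IH] //=; case/andP=> ht hs; rewrite all_cat hWr //; exact: IH.
Qed.

Lemma X_H s : all rng s -> (forall k, (k < 6)%N -> lams (flatten (map W s)) k = false) ->
  inH (X *m prodR s *m Y).
Proof.
move=> hs hl; rewrite X_prod // -mulmxA hXY mulmx1.
by apply: Hlam => //; apply: flat_rng.
Qed.

Lemma conj_gen g : isGen g -> inH (X *m g *m Y) /\ inH (X *m invmx g *m Y).
Proof.
move=> [l [j [[eps ->] [hj ->]]]].
have [hN hk] := @kmat_prod j hj.
have hj' : rng j by rewrite /rng; case/andP: hj => h1 ->; rewrite andbT (leq_trans _ h1).
have hs1 : all rng (Le eps ++ j :: Le eps ++ Nset j).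
  by rewrite !all_cat /= ?all_cat hj' (@rng6_rng _ (Le_rng6 eps)) (@rng6_rng _ hN).
have hs2 : all rng (Nset j ++ Le eps ++ j :: Le eps).
  by rewrite !all_cat /= ?all_cat hj' (@rng6_rng _ (Le_rng6 eps)) (@rng6_rng _ hN).
have eg : Kof eps *m Rref j *m Kof eps *m kmat j = prodR (Le eps ++ j :: Le eps ++ Nset j).
  by rewrite !(prodR_cat, prodR_cons) -!Kof_Le -hk !mulmxA.
have eg' : invmx (Kof eps *m Rref j *m Kof eps *m kmat j) =
           prodR (Nset j ++ Le eps ++ j :: Le eps).
  apply: inv_of; rewrite !(prodR_cat, prodR_cons) -!Kof_Le -hk !mulmxA.
  rewrite -[_ *m kmat j *m kmat j]mulmxA /kmat Kof_inv mulmx1.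
  rewrite -[_ *m Kof eps *m Kof eps]mulmxA Kof_inv mulmx1.
  rewrite -[_ *m Rref j *m Rref j]mulmxA R_inv // mulmx1 Kof_inv //.
have hc := @hchk j hj.
split.
  rewrite eg; apply: X_H => // k hk6.
  rewrite !lamsW_cat /= lams_cat lamsW_cat -(hc k hk6).
  set a := lams (flatten _) k; set b := lams (W j) k; set c := lams (flatten _) k.
  by case: a; case: b; case: c.
rewrite eg'; apply: X_H => // k hk6.
rewrite !lamsW_cat /= lams_cat -(hc k hk6).
set a := lams (flatten _) k; set b := lams (W j) k; set c := lams (flatten _) k.
by case: a; case: b; case: c.
Qed.

Lemma conj_H M : inH M -> inH (X *m M *m Y).
Proof.
have split_ : forall g N, X *m (g *m N) *m Y = (X *m g *m Y) *m (X *m N *m Y).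
  by move=> g N; rewrite !mulmxA -[X *m g *m Y *m X]mulmxA hYX mulmx1.
elim=> [|g N hg _ IH|g N hg _ IH].
- by rewrite mulmx1 hXY; exact: inH_one.
- by rewrite split_; apply: Hmul => //; case: (@conj_gen g hg).
- by rewrite split_; apply: Hmul => //; case: (@conj_gen g hg).
Qed.
End Conj.



Lemma eA : Amat = toM Arows. Proof. by []. Qed.

Lemma checkAA : eqM (lmul Arows Ail) idl && eqM (lmul Ail Arows) idl.
Proof. by vm_compute. Qed.
Lemma AAi : Amat *m toM Ail = 1%:M.
Proof. rewrite eA toM_mul -toM_id; apply: eqM_toM; by case/andP: checkAA. Qed.
Lemma AiA : toM Ail *m Amat = 1%:M.
Proof. rewrite eA toM_mul -toM_id; apply: eqM_toM; by case/andP: checkAA. Qed.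

Lemma checkA : all (fun t => eqM (lmul Arows (Rl t)) (lmul (lprod (WA t)) Arows)) (iota 1 27).
Proof. by vm_compute. Qed.
Lemma checkAi : all (fun t => eqM (lmul Ail (Rl t)) (lmul (lprod (WAi t)) Ail)) (iota 1 27).
Proof. by vm_compute. Qed.

Lemma rng_iota t : rng t -> (1 <= t < 1 + 27)%N.
Proof. by case/andP => -> h; rewrite add1n ltnS. Qed.

Lemma hWA t : rng t -> Amat *m Rref t = prodR (WA t) *m Amat.
Proof.
move=> /rng_iota ht; rewrite eA Rref_toM prodR_toM !toM_mul; apply: eqM_toM.
exact: (all_iota t checkA ht).
Qed.
Lemma hWAi t : rng t -> toM Ail *m Rref t = prodR (WAi t) *m toM Ail.
Proof.
move=> /rng_iota ht; rewrite Rref_toM prodR_toM !toM_mul; apply: eqM_toM.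
exact: (all_iota t checkAi ht).
Qed.

Lemma checkWr : all (fun t => all rng (WA t) && all rng (WAi t)) (iota 1 27).
Proof. by vm_compute. Qed.
Lemma hWAr t : rng t -> all rng (WA t).
Proof. by move=> /rng_iota ht; case/andP: (all_iota t checkWr ht). Qed.
Lemma hWAir t : rng t -> all rng (WAi t).
Proof. by move=> /rng_iota ht; case/andP: (all_iota t checkWr ht). Qed.

Definition chkW (W : nat -> seq nat) :=
  all (fun j => all (fun k => ~~ (lams (W j) k (+) lams (flatten (map W (Nset j))) k)) (iota 0 6)) (iota 7 21).
Lemma chkWA : chkW WA && chkW WAi.
Proof. by vm_compute. Qed.
Lemma hchk_of W : chkW W -> forall j, (7 <= j <= 27)%N -> forall k, (k < 6)%N ->
  lams (W j) k (+) lams (flatten (map W (Nset j))) k = false.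
Proof.
move=> h j hj k hk; have h1 := all_iota j h hj.
by apply/negbTE; exact: (all_iota k h1 hk).
Qed.

Lemma invA : invmx Amat = toM Ail.
Proof. exact: inv_of AAi. Qed.

Theorem lemma8p3 :
  forall N : 'M[int]_7,
    inH N <-> exists M : 'M[int]_7, inH M /\ N = Amat *m M *m invmx Amat.
Proof.
move=> N; rewrite invA; split.
  move=> hN; exists (toM Ail *m N *m Amat); split.
    apply: (@conj_H (toM Ail) Amat WAi AiA AAi hWAi hWAir _ N hN).
    by apply: hchk_of; case/andP: chkWA.
  by rewrite !mulmxA AAi mul1mx -mulmxA AAi mulmx1.
case=> M [hM ->].
apply: (@conj_H Amat (toM Ail) WA AAi AiA hWA hWAr _ M hM).
by apply: hchk_of; case/andP: chkWA.
Qed.
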